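(* Let $\phi:\Delta\to\mathbb R$ be continuous, and for each $n$ and each pair of partitions $\lambda,\mu\vdash n$ let $\phi^{(\lambda)}_n(\mu)\in\mathbb R$ be given, such that there is a sequence $\delta_n\to0$ (not depending on $\lambda,\mu$) with $|\phi^{(\lambda)}_n(\mu)-\phi(\mu/n)|\le\delta_n$ for all $n,\lambda,\mu$. If $n\to\infty$ and $\lambda=\lambda^{(n)}\vdash n$ satisfies $\lambda/n\to x\in\Delta$, then \[ \frac1n\log\Big(\sum_{\mu\vdash n,\ \mu\trianglerighteq\lambda}\exp\big(n\,\phi^{(\lambda)}_n(\mu)\big)\Big)\to\max_{y\in\Delta(x)}\phi(y). \]
   Context: Fix $\theta\in\{2,3,\dots\}$. A partition $\lambda\vdash n$ means a vector $(\lambda_1,\dots,\lambda_\theta)$ of nonnegative integers with $\lambda_1\ge\dots\ge\lambda_\theta$ and $\sum\lambda_i=n$ (so $\lambda/n\in\Delta$). $\Delta=\{x\in[0,1]^\theta:x_1\ge\dots\ge x_\theta,\ \sum_i x_i=1\}$. For vectors $x,y$ in $\Delta$ (or partitions), $y\trianglerighteq x$ means $y_1+\dots+y_i\ge x_1+\dots+x_i$ for all $i$, and $\Delta(x)=\{y\in\Delta:y\trianglerighteq x\}$. *)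

(* Defs.v *)
From HB Require Import structures.
From mathcomp Require Import all_boot all_order all_algebra.
From mathcomp Require Import all_classical all_reals all_analysis.
Set Implicit Arguments. Unset Strict Implicit. Unset Printing Implicit Defensive.
Import Order.TTheory GRing.Theory Num.Theory.
Import numFieldNormedType.Exports.
Local Open Scope ring_scope.

(* lam is a partition of n into (at most) th parts: a nonincreasing
   vector (lam_1,...,lam_th) of naturals summing to n. *)
Definition is_part (th n : nat) (lam : 'I_th -> nat) : bool :=
  [forall i : 'I_th, forall j : 'I_th, (i <= j)%N ==> (lam j <= lam i)%N]
  && ((\sum_(i < th) lam i)%N == n).

(* dominance order on partitions: dom_nat mu lam  <->  mu |>= lam *)
Definition dom_nat (th : nat) (mu lam : 'I_th -> nat) : bool :=
  [forall i : 'I_th,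
     (\sum_(j < th | (j <= i)%N) lam j <= \sum_(j < th | (j <= i)%N) mu j)%N].

Definition Delta (R : realType) (th : nat) : set 'rV[R]_th :=
  [set x | (forall i : 'I_th, 0 <= x ord0 i <= 1)
         /\ (forall i j : 'I_th, (i <= j)%N -> x ord0 j <= x ord0 i)
         /\ \sum_(i < th) x ord0 i = 1].

(* dominance order on real vectors: dom_real y x <-> y |>= x *)
Definition dom_real (R : realType) (th : nat) (y x : 'rV[R]_th) : Prop :=
  forall i : 'I_th,
    \sum_(j < th | (j <= i)%N) x ord0 j <= \sum_(j < th | (j <= i)%N) y ord0 j.

Definition DeltaDom (R : realType) (th : nat) (x : 'rV[R]_th) : set 'rV[R]_th :=
  [set y | @Delta R th y /\ dom_real y x].

Definition normalize (R : realType) (th n : nat) (lam : 'I_th -> nat) : 'rV[R]_th :=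
  \row_i ((lam i)%:R / n%:R).

(* Main.v *)
Require Import Defs.
From HB Require Import structures.
From mathcomp Require Import all_boot all_order all_algebra.
From mathcomp Require Import all_classical all_reals all_analysis.
From mathcomp Require Import ring lra.
Import Order.TTheory GRing.Theory Num.Theory.
Import numFieldNormedType.Exports.
Local Open Scope classical_set_scope.
Local Open Scope ring_scope.
Set Implicit Arguments. Unset Strict Implicit. Unset Printing Implicit Defensive.

Ltac sg := match goal with |- ?G => idtac G end.
Section H.
Variable R : realType.

Lemma evt_gt (c : R) : \forall n \near \oo, c < n%:R.
Proof.
exists (Num.truncn c).+1 => // n /= hn.
apply: lt_le_trans (Num.Theory.truncnS_gt c) _; rewrite ler_nat //.
Qed.

Lemma ln_n (A c : R) : 0 <= A -> 0 < c ->
  \forall n \near \oo, A * ln (n.+1%:R) / n%:R <= c.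
Proof.
move=> A0 c0.
pose k := (Num.truncn (4 * A / c)).+1.
have k0 : (0 : R) < k%:R by rewrite ltr0n.
have hk : 4 * A / c < k%:R := Num.Theory.truncnS_gt _.
near=> n.
have n0 : (0 : R) < n%:R.
  apply: lt_le_trans (_ : 1 <= _); first by [].
  by near: n; apply: filterS (evt_gt 1) => n /ltW.
have : ln (n.+1%:R : R) <= ln (k%:R : R) + n.+1%:R / k%:R.
  have e : (n.+1%:R : R) = k%:R * (n.+1%:R / k%:R) by rewrite mulrC divfK // gt_eqF.
rewrite [X in ln X]e lnM ?posrE ?divr_gt0 ?ltr0n //.
  by rewrite lerD2l; apply/ltW/ln_sublinear; rewrite divr_gt0 // ltr0n.
move=> hl.
rewrite ler_pdivrMr //.
apply: le_trans (ler_wpM2l A0 hl) _.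
rewrite mulrDr.
have h1 : A * ln k%:R <= c / 2 * n%:R.
  rewrite -ler_pdivrMl ?divr_gt0 //.
  near: n; apply: filterS (evt_gt ((c / 2)^-1 * (A * ln k%:R))) => n /ltW //.
have h2 : A * (n.+1%:R / k%:R) <= c / 2 * n%:R.
  have hn1 : (0 < n)%N by rewrite -(ltr_nat R).
  have hn2 : n.+1%:R <= 2 * n%:R :> R.
    by rewrite -natrM ler_nat mul2n -addnn -addn1 leq_add2l.
  have hk' : 2 * A / k%:R <= c / 2.
    rewrite ler_pdivrMr // -ler_pdivrMl ?divr_gt0 //; apply: ltW.
    apply: le_lt_trans hk; rewrite le_eqVlt; apply/orP; left; apply/eqP.
    by field; rewrite gt_eqF.
  apply: le_trans _ (ler_wpM2r (ler0n _ n) hk').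
  have -> : 2 * A / k%:R * n%:R = A * (2 * n%:R / k%:R) by ring.
  by rewrite ler_wpM2l // ler_wpM2r ?invr_ge0 ?ler0n.
lra.
Unshelve. all: by end_near.
Qed.
End H.

Section H2.
Variable R : realType.
Variable th : nat.
Implicit Types (y z v : 'rV[R]_th).

Definition ps (z : 'rV[R]_th) (i : 'I_th) := \sum_(j < th | (j <= i)%N) z ord0 j.

Lemma entry_le_norm v i : `|v ord0 i| <= `|v|.
Proof.
rewrite [leRHS]/Num.norm /= mx_normrE.
by apply/bigmax_geP; right; exists (ord0, i).
Qed.

Lemma norm_le_entries v c : 0 <= c -> (forall i, `|v ord0 i| <= c) -> `|v| <= c.
Proof.
move=> c0 h; rewrite [leLHS]/Num.norm /= mx_normrE.
apply/bigmax_leP; split => // -[a b] _ /=; rewrite (ord1 a); exact: h.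
Qed.

Lemma ps_cont i : continuous (fun z => ps z i).
Proof.
move=> z; rewrite /ps.
apply: cvg_big.
- exact: add_continuous.
- exact: nbhs_filter.
- move=> j _; exact: coord_continuous.
Qed.

Lemma contB (f g : 'rV[R]_th -> R) :
  continuous f -> continuous g -> continuous (fun y => f y - g y).
Proof. by move=> cf cg z; exact: (cvgB (cf z) (cg z)). Qed.

Lemma coord_cont i : continuous (fun y : 'rV[R]_th => y ord0 i).
Proof. exact: coord_continuous. Qed.

Lemma closed_ge0 (f : 'rV[R]_th -> R) : continuous f -> closed [set y | 0 <= f y].
Proof.
move=> cf; apply: (@preimage_closed _ _ f [set r : R | 0 <= r]).
  by move=> ? _; exact: cf.
exact: closed_ge.
Qed.

Lemma closed_eq1 (f : 'rV[R]_th -> R) : continuous f -> closed [set y | f y = 1].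
Proof.
move=> cf; apply: (@preimage_closed _ _ f [set r : R | r = 1]).
  by move=> ? _; exact: cf.
exact: closed_eq.
Qed.

Lemma Delta_closed : closed (@Delta R th).
Proof.
have -> : @Delta R th =
  ((\bigcap_(i in setT) [set y | 0 <= y ord0 i]) `&`
   (\bigcap_(i in setT) [set y | 0 <= 1 - y ord0 i])) `&`
  ((\bigcap_(p in [set p : 'I_th * 'I_th | (p.1 <= p.2)%N])
      [set y | 0 <= y ord0 p.1 - y ord0 p.2]) `&`
   [set y | \sum_(i < th) y ord0 i = 1]).
  apply/seteqP; split => y /=.
    move=> [h1 [h2 h3]]; split; split => //.
    - by move=> i _ /=; case/andP: (h1 i).
    - by move=> i _ /=; rewrite subr_ge0; case/andP: (h1 i).
    - by move=> [i j] /= hij; rewrite subr_ge0; apply: h2.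
  move=> [[h1 h1'] [h2 h3]]; split; last split => //.
  - by move=> i; rewrite (h1 i I) /= -subr_ge0 (h1' i I).
  - by move=> i j hij; rewrite -subr_ge0; exact: (h2 (i, j) hij).
apply: closedI; apply: closedI.
- apply: closed_bigI => i _; apply: closed_ge0; exact: coord_cont.
- apply: closed_bigI => i _; apply: closed_ge0; apply: contB.
    exact: cst_continuous.
  exact: coord_cont.
- apply: closed_bigI => p _; apply: closed_ge0; apply: contB; exact: coord_cont.
- apply: closed_eq1 => z; apply: cvg_big.
  + exact: add_continuous.
  + exact: nbhs_filter.
  + move=> j _; exact: coord_continuous.
Qed.

Lemma DeltaDom_closed x : closed (@DeltaDom R th x).
Proof.
have -> : @DeltaDom R th x = @Delta R th `&`
   \bigcap_(i in setT) [set y | 0 <= ps y i - ps x i].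
  apply/seteqP; split => y /=.
    by move=> [h1 h2]; split => // i _ /=; rewrite subr_ge0; exact: h2.
  by move=> [h1 h2]; split => // i; rewrite -subr_ge0; exact: h2.
apply: closedI; first exact: Delta_closed.
apply: closed_bigI => i _; apply: closed_ge0; apply: contB.
  exact: ps_cont.
exact: cst_continuous.
Qed.

Lemma Delta_norm y : Delta y -> `|y| <= 1.
Proof.
move=> [h1 _]; apply: norm_le_entries => // i.
by case/andP: (h1 i) => a b; rewrite ger0_norm.
Qed.

Lemma DeltaDom_compact x : compact (@DeltaDom R th x).
Proof.
apply: bounded_closed_compact; last exact: DeltaDom_closed.
exists 1; split => // M M1 y [Dy _] /=.
apply: le_trans (Delta_norm Dy) _; exact: ltW.
Qed.

Lemma Delta_compact : compact (@Delta R th).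
Proof.
apply: bounded_closed_compact; last exact: Delta_closed.
exists 1; split => // M M1 y Dy /=.
apply: le_trans (Delta_norm Dy) _; exact: ltW.
Qed.


Lemma ps_split y i :
  \sum_(j < th) y ord0 j = ps y i + \sum_(j < th | ~~ (j <= i)%N) y ord0 j.
Proof. by rewrite /ps (bigID (fun j : 'I_th => (j <= i)%N)). Qed.

Lemma ps_le1 y i : Delta y -> ps y i <= 1.
Proof.
move=> [h1 [_ h3]]; rewrite -h3 (ps_split y i) lerDl sumr_ge0 // => j _.
by case/andP: (h1 j).
Qed.

Lemma ps_normalize n (m : 'I_th -> nat) i :
  ps (@normalize R th n m) i = (\sum_(j < th | (j <= i)%N) m j)%:R / n%:R.
Proof.
rewrite /ps natr_sum mulr_suml; apply: eq_bigr => j _; by rewrite mxE.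
Qed.

Lemma part_le n (m : 'I_th -> nat) i : is_part n m -> (m i <= n)%N.
Proof.
case/andP => _ /eqP <-; rewrite (bigD1 i) //= leq_addr //.
Qed.

Lemma Delta_normalize n (m : 'I_th -> nat) : (0 < n)%N -> is_part n m -> Delta (@normalize R th n m).
Proof.
move=> n0 hp; have n0' : (0:R) < n%:R by rewrite ltr0n.
split; [|split].
- move=> i; rewrite mxE divr_ge0 ?ler0n //= ler_pdivrMr // mul1r ler_nat.
  exact: part_le.
- move=> i j hij; rewrite !mxE ler_wpM2r ?invr_ge0 ?ler0n // ler_nat.
  case/andP: hp => /forallP /(_ i) /forallP /(_ j) /implyP /(_ hij) //.
- case/andP: hp => _ /eqP hs.
  under eq_bigr => i _ do rewrite mxE.
  by rewrite -mulr_suml -natr_sum hs divff // gt_eqF.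
Qed.

Lemma dom_normalize n (mu la : 'I_th -> nat) :
  dom_nat mu la -> dom_real (@normalize R th n mu) (@normalize R th n la).
Proof.
move=> /forallP h i; rewrite -/(ps _ i) -/(ps _ i) !ps_normalize.
by rewrite ler_wpM2r ?invr_ge0 ?ler0n // ler_nat.
Qed.

End H2.

Lemma cvg_max_gen (T : Type) (F : set_system T) (FF : Filter F) (R : realType)
  (f g : T -> R) a b :
  f @ F --> a -> g @ F --> b -> (fun t => Num.max (f t) (g t)) @ F --> Num.max a b.
Proof.
move=> cf cg.
have -> : (fun t => Num.max (f t) (g t)) = (fun t => (f t + g t + `|f t - g t|) / 2).
  by apply: funext => t; rewrite maxr_absE.
rewrite maxr_absE.
apply: cvgM; last exact: cvg_cst.
apply: cvgD; first exact: cvgD.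
by apply: cvg_norm; apply: cvgB.
Qed.

Section Round.
Variable R : realType.
Variable th : nat.

Lemma round (n : nat) (z : 'rV[R]_th) (i0 : 'I_th) : val i0 = 0%N -> Delta z ->
  exists mu : 'I_th -> nat, is_part n mu /\
    (forall i, n%:R * ps z i <= (\sum_(j < th | (j <= i)%N) mu j)%:R) /\
    (forall i, `|n%:R * z ord0 i - (mu i)%:R| <= th%:R).
Proof.
move=> hi0 [h1 [h2 h3]].
have zge0 j : 0 <= z ord0 j by case/andP: (h1 j).
have nz0 j : (0:R) <= n%:R * z ord0 j by rewrite mulr_ge0 ?ler0n.
pose t j := Num.truncn (n%:R * z ord0 j).
have ht j : (t j)%:R <= n%:R * z ord0 j < (t j).+1%:R by apply: truncn_itv.
pose T := (\sum_(j < th | j != i0) t j)%N.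
have h3' : z ord0 i0 + \sum_(j < th | j != i0) z ord0 j = 1 by rewrite -h3 [RHS](bigD1 i0).
have hTr : T%:R <= n%:R * (1 - z ord0 i0).
  have e : 1 - z ord0 i0 = \sum_(j < th | j != i0) z ord0 j by rewrite -h3' addrC addKr.
  rewrite /T natr_sum e mulr_sumr; apply: ler_sum => j _.
  by case/andP: (ht j).
have hT : (T <= n)%N.
  rewrite -(ler_nat R); apply: le_trans hTr _.
  by rewrite ler_piMr ?ler0n // lerBlDr lerDl.
pose mu j := if j == i0 then (n - T)%N else t j.
have mui0 : (mu i0)%:R = n%:R - T%:R :> R by rewrite /mu eqxx natrB.
have musum : (\sum_(j < th) mu j)%N = n.
  rewrite (bigD1 i0) //= {1}/mu eqxx.
  rewrite (eq_bigr t); first by rewrite -/T subnK.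
  by move=> j /negbTE hj; rewrite /mu hj.
have i0le i : (i0 <= i)%N by rewrite hi0.
exists mu; split; [|split].
- apply/andP; split; last by apply/eqP.
  apply/forallP => i; apply/forallP => j; apply/implyP => hij.
  have [ji0|ji0] := eqVneq j i0.
    have -> : i = i0 by apply: val_inj => /=; rewrite hi0; move: hij; rewrite ji0 hi0 leqn0 => /eqP.
    by rewrite ji0.
  have [ii0|ii0] := eqVneq i i0.
    rewrite -(ler_nat R) ii0 mui0 /mu (negbTE ji0).
    apply: le_trans (_ : n%:R * z ord0 j <= _); first by case/andP: (ht j).
    apply: le_trans (_ : n%:R * z ord0 i0 <= _).
      by rewrite ler_wpM2l ?ler0n // h2 // i0le.
    rewrite lerBrDr; apply: le_trans (_ : n%:R * z ord0 i0 + n%:R * (1 - z ord0 i0) <= _).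
      by rewrite lerD2l.
    by rewrite -mulrDr addrC subrK mulr1.
  rewrite /mu (negbTE ji0) (negbTE ii0); apply: le_truncn.
  by rewrite ler_wpM2l ?ler0n // h2.
- move=> i.
  have hs : (\sum_(j < th | (j <= i)%N) mu j + \sum_(j < th | ~~ (j <= i)%N) t j)%N = n.
    rewrite -musum [RHS](bigID (fun j : 'I_th => (j <= i)%N)) /=; congr (_ + _)%N.
    apply: eq_bigr => j hj; rewrite /mu; case: eqP => // hji0.
    by move: hj; rewrite hji0 i0le.
  have -> : (\sum_(j < th | (j <= i)%N) mu j)%:R =
            n%:R - (\sum_(j < th | ~~ (j <= i)%N) t j)%:R :> R.
    by rewrite -hs natrD addrK.
  rewrite /ps lerBrDr natr_sum.
  have : \sum_(j < th) z ord0 j = ps z i + \sum_(j < th | ~~ (j <= i)%N) z ord0 j.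
    exact: ps_split.
  rewrite h3 => e1.
  apply: le_trans (_ : n%:R * ps z i + n%:R * \sum_(j < th | ~~ (j <= i)%N) z ord0 j <= _).
    rewrite lerD2l mulr_sumr; apply: ler_sum => j _; by case/andP: (ht j).
  by rewrite -mulrDr -e1 mulr1 /ps.
- have hsum1 : \sum_(j < th | j != i0) (1:R) <= th%:R.
    have : \sum_(j < th) (1:R) = th%:R by rewrite sumr_const card_ord.
    rewrite (bigD1 i0) //= => <-; by rewrite lerDr.
  move=> i; have [ii0|ii0] := eqVneq i i0.
  + rewrite ii0 mui0 distrC.
    have -> : n%:R - T%:R - n%:R * z ord0 i0 =
              \sum_(j < th | j != i0) (n%:R * z ord0 j - (t j)%:R) :> R.
      rewrite sumrB -mulr_sumr /T natr_sum.
      have -> : \sum_(j < th | j != i0) z ord0 j = 1 - z ord0 i0 by rewrite -h3' addrC addKr.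
      by rewrite mulrBr mulr1 addrAC.
    rewrite ger0_norm; last by apply: sumr_ge0 => j _; rewrite subr_ge0; case/andP: (ht j).
    apply: le_trans hsum1; apply: ler_sum => j _.
    rewrite lerBlDr addrC; case/andP: (ht j) => _ /ltW; by rewrite -natr1.
  + rewrite /mu (negbTE ii0) ger0_norm; last by rewrite subr_ge0; case/andP: (ht i).
    apply: le_trans (_ : 1 <= _).
      rewrite lerBlDr addrC; case/andP: (ht i) => _ /ltW; by rewrite -natr1.
    by rewrite ler1n; apply: leq_ltn_trans (ltn_ord i0); rewrite hi0.
Qed.

End Round.

Section Sums.
Variable R : realType.
Variable th : nat.

Lemma sum_ge (n : nat) (f : ('I_th -> nat) -> R) (la mu : 'I_th -> nat) :
  is_part n mu -> dom_nat mu la -> (forall m, 0 <= f m) ->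
  f mu <= \sum_(m : {ffun 'I_th -> 'I_n.+1} |
                 is_part n (fun i => nat_of_ord (m i)) &&
                 dom_nat (fun i => nat_of_ord (m i)) la) f (fun i => nat_of_ord (m i)).
Proof.
move=> hp hd f0.
pose m0 : {ffun 'I_th -> 'I_n.+1} := [ffun i => inord (mu i)].
have hm0 : (fun i => nat_of_ord (m0 i)) = mu.
  by apply: funext => i; rewrite ffunE inordK // ltnS; exact: part_le.
rewrite (bigD1 m0) /=; last by rewrite hm0 hp hd.
rewrite hm0 lerDl; apply: sumr_ge0 => m _; exact: f0.
Qed.

Lemma sum_le (n : nat) (f : ('I_th -> nat) -> R) (la : 'I_th -> nat) (C : R) :
  0 <= C ->
  (forall m : 'I_th -> nat, is_part n m -> dom_nat m la -> f m <= C) ->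
  \sum_(m : {ffun 'I_th -> 'I_n.+1} |
                 is_part n (fun i => nat_of_ord (m i)) &&
                 dom_nat (fun i => nat_of_ord (m i)) la) f (fun i => nat_of_ord (m i))
  <= C * (n.+1 ^ th)%:R.
Proof.
move=> C0 h.
apply: le_trans (_ : \sum_(m : {ffun 'I_th -> 'I_n.+1} |
                 is_part n (fun i => nat_of_ord (m i)) &&
                 dom_nat (fun i => nat_of_ord (m i)) la) C <= _).
  by apply: ler_sum => m /andP [h1 h2]; apply: h.
rewrite sumr_const -[C *+ _]mulr_natr ler_wpM2l // ler_nat.
apply: leq_trans (max_card _) _.
by rewrite card_ffun !card_ord.
Qed.

Lemma key_ub (phi : 'rV[R]_th -> R) (x : 'rV[R]_th) (M c : R) : (0 < th)%N ->
  {within @Delta R th, continuous phi} -> @Delta R th x ->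
  (forall z, DeltaDom x z -> phi z <= M) -> 0 < c ->
  exists2 eta : R, 0 < eta & forall w, @Delta R th w ->
     (forall i, ps x i - ps w i <= eta) -> phi w < M + c.
Proof.
move=> th0 cphi Dx hM c0.
pose sf w := \sum_(i < th) Num.max 0 (ps x i - ps w i).
pose G w := Num.max (sf w) (M + c - phi w).
have csf : continuous sf.
  move=> w; apply: cvg_big.
  - exact: add_continuous.
  - exact: nbhs_filter.
  - move=> i _.
    have ci : continuous (fun w : 'rV[R]_th => ps x i - ps w i).
      by apply: contB; [exact: cst_continuous | exact: ps_cont].
    exact: (@cvg_max_gen _ _ _ R (fun=> 0) (fun w : 'rV[R]_th => ps x i - ps w i) _ _ (cvg_cst _) (ci w)).
have cG : {within @Delta R th, continuous G}.
  apply/subspace_continuousP => w Dw; apply: cvg_max_gen.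
    exact: cvg_within_filter (csf w).
  apply: cvgB; first exact: cvg_cst.
  by move/subspace_continuousP : cphi; apply.
have [c1 Dc1 hmin] := EVT_min_rV (ex_intro _ x Dx) (@Delta_compact R th) cG.
move: Dc1; rewrite inE => Dc1.
have sfge w i : Num.max 0 (ps x i - ps w i) <= sf w.
  rewrite /sf (bigD1 i) //= lerDl; apply: sumr_ge0 => j _; by rewrite le_max lexx.
have eta0 : 0 < G c1.
  case: (pselect (dom_real c1 x)) => hd.
    rewrite /G lt_max; apply/orP; right.
    have := hM c1 (conj Dc1 hd); lra.
  have [i hi] : exists i, ~ (ps x i <= ps c1 i).
    by apply/existsNP => hh; apply: hd => i; exact: hh.
  rewrite /G lt_max; apply/orP; left.
  apply: lt_le_trans (sfge c1 i); rewrite lt_max; apply/orP; right.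
  by rewrite subr_gt0 ltNge; apply/negP.
exists (G c1 / (2 * th%:R)).
  by rewrite divr_gt0 // mulr_gt0 // ltr0n.
move=> w Dw hw.
have := hmin w; rewrite inE => /(_ Dw); rewrite le_max => /orP [h|h].
  exfalso.
  have : sf w <= G c1 / 2.
    apply: le_trans (_ : \sum_(i < th) (G c1 / (2 * th%:R)) <= _).
      apply: ler_sum => i _; rewrite ge_max; apply/andP; split => //.
      by rewrite divr_ge0 // ?ltW // mulr_ge0 // ler0n.
    rewrite sumr_const card_ord -mulr_natr.
    rewrite le_eqVlt; apply/orP; left; apply/eqP; field.
    by rewrite pnatr_eq0 -lt0n.
  move: h; lra.
move: h; lra.
Qed.


Lemma key_lb (phi : 'rV[R]_th -> R) (y : 'rV[R]_th) (c : R) :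
  {within @Delta R th, continuous phi} -> @Delta R th y -> 0 < c ->
  exists2 r : R, 0 < r & forall w, @Delta R th w ->
    (forall i, `|y ord0 i - w ord0 i| <= r) -> phi y - c < phi w.
Proof.
move=> cphi Dy c0.
have h : phi @ within (@Delta R th) (nbhs y) --> phi y.
  by move/subspace_continuousP : cphi; apply.
move/cvgrPdist_lt : h => /(_ c c0) /nbhs_ballP [r r0 hr].
exists (r / 2); first by rewrite divr_gt0.
move=> w Dw hw.
have : ball y r w.
  rewrite -ball_normE /ball_ /=; apply: le_lt_trans (_ : r / 2 < r); last first.
    by rewrite ltr_pdivrMr // ltr_pMr // ltr1n.
  apply: norm_le_entries; first by rewrite divr_ge0 // ltW.
  by move=> i; rewrite !mxE; exact: hw.
move=> /hr /(_ Dw); rewrite ltr_norml; lra.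
Qed.

End Sums.

Lemma sum_delta (R : realType) (th : nat) (i0 : 'I_th) (P : pred 'I_th) : P i0 ->
  \sum_(j < th | P j) ((j == i0)%:R : R) = 1.
Proof.
move=> Pi0; rewrite (bigD1 i0) //= eqxx big1 ?addr0 // => j /andP [_ /negbTE ->].
by [].
Qed.

Unset Implicit Arguments.

Theorem lemma3p2 (R : realType) (th : nat) (hth : (2 <= th)%N)
  (phi : 'rV[R]_th -> R)
  (phin : nat -> ('I_th -> nat) -> ('I_th -> nat) -> R)
  (delta : nat -> R)
  (lam : nat -> ('I_th -> nat)) (x : 'rV[R]_th) :
  {within @Delta R th, continuous phi} ->
  delta @ \oo --> 0 ->
  (forall (n : nat) (l m : 'I_th -> nat), (0 < n)%N ->
     is_part n l -> is_part n m ->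
     `| phin n l m - phi (@normalize R th n m) | <= delta n) ->
  (forall n : nat, is_part n (lam n)) ->
  @Delta R th x ->
  (fun n => @normalize R th n (lam n)) @ \oo --> x ->
  exists2 y : 'rV[R]_th, DeltaDom x y /\ (forall z, DeltaDom x z -> phi z <= phi y) &
    (fun n : nat =>
       ln (\sum_(m : {ffun 'I_th -> 'I_n.+1} |
                 is_part n (fun i => nat_of_ord (m i)) &&
                 dom_nat (fun i => nat_of_ord (m i)) (lam n))
             expR (n%:R * phin n (lam n) (fun i => nat_of_ord (m i)))) / n%:R)
      @ \oo --> phi y.
Proof.
move=> cphi cdelta hphin hlam hx hcv.
have th0 : (0 < th)%N by apply: leq_trans hth.
pose i0 : 'I_th := Ordinal th0.
have hi0 : val i0 = 0%N by [].
have D0 : DeltaDom x !=set0 by exists x; split => // i; exact: lexx.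
have cphiD : {within DeltaDom x, continuous phi}.
  by apply: continuous_subspaceW cphi => z [].
have [y yD ymax] := EVT_max_rV D0 (@DeltaDom_compact R th x) cphiD.
move: yD; rewrite inE => yD.
have ymax' : forall z, DeltaDom x z -> phi z <= phi y.
  by move=> z Dz; apply: ymax; rewrite inE.
exists y; first by split.
have Dy : Delta y := yD.1.
pose v n := @normalize R th n (lam n).
have psv i : (fun n => ps (v n) i) @ \oo --> ps x i.
  exact: (cvg_comp _ _ hcv (@ps_cont R th i x)).
apply/cvgrPdist_le => e e0.
have e4 : 0 < e / 4 by rewrite divr_gt0.
have e2 : 0 < e / 2 by rewrite divr_gt0.
have [eta eta0 hub] := key_ub th0 cphi hx ymax' e2.
have [r r0 hlb] := key_lb cphi Dy e2.
pose s := Num.min (r / 2) (1 / 2).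
have s0 : 0 < s by rewrite lt_min !divr_gt0.
have s1 : s <= 1 / 2 by rewrite ge_min lexx orbT.
have sr : s <= r / 2 by rewrite ge_min lexx.
pose z := \row_i ((1 - s) * y ord0 i + s * (i == i0)%:R) : 'rV[R]_th.
have i0le (i : 'I_th) : (i0 <= i)%N by rewrite hi0.
have [Dy1 [Dy2 Dy3]] := Dy.
have psz i : ps z i = (1 - s) * ps y i + s.
  rewrite /ps; under eq_bigr => j _ do rewrite mxE.
  by rewrite big_split /= -mulr_sumr -mulr_sumr sum_delta ?mulr1.
have Dz : Delta z.
  split; [|split].
  - move=> i; rewrite mxE; case/andP: (Dy1 i) => a b.
    apply/andP; split.
      by apply: addr_ge0; apply: mulr_ge0; try lra; case: (i == i0).
    case: (i == i0) => /=; nra.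
  - move=> i j hij; rewrite !mxE.
    have [ji0|ji0] := eqVneq j i0.
      have -> : i = i0 by apply: val_inj => /=; move: hij; rewrite ji0 /= leqn0 => /eqP.
      by rewrite ji0.
    rewrite (_ : (false%:R : R) = 0) // mulr0 addr0.
    have := Dy2 i j hij; case: (i == i0) => /=; nra.
  - under eq_bigr => j _ do rewrite mxE.
    by rewrite big_split /= -mulr_sumr -mulr_sumr sum_delta // Dy3; ring.
have zy i : `|y ord0 i - z ord0 i| <= s.
  rewrite mxE; case/andP: (Dy1 i) => a b.
  rewrite ler_norml; case: (i == i0) => /=; apply/andP; split; nra.
have evz i : \forall n \near \oo, ps (v n) i <= ps z i.
  have hxy : ps x i <= ps y i := yD.2 i.
  have [hy|hy] := ltP (ps y i) 1.
    have hp : 0 < s * (1 - ps y i) by rewrite mulr_gt0 // subr_gt0.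
    have hh := (proj1 (cvgrPdist_le _ _) (psv i)) _ hp.
    near=> n.
    have : `|ps x i - ps (v n) i| <= s * (1 - ps y i) by near: n; exact: hh.
    rewrite psz ler_norml => /andP [h1 h2]; lra.
  near=> n.
  have n0 : (0 < n)%N by rewrite -(ltr_nat R); near: n; exact: (@evt_gt R 0).
  have : ps (v n) i <= 1.
    by apply: ps_le1; apply: Delta_normalize.
  rewrite psz; nra.
have evd := (proj1 (cvgrPdist_le _ _) cdelta) _ e4.
have evx i : \forall n \near \oo, ps x i - ps (v n) i <= eta.
  have hh := (proj1 (cvgrPdist_le _ _) (psv i)) _ eta0.
  near=> n.
  have : `|ps x i - ps (v n) i| <= eta by near: n; exact: hh.
  by rewrite ler_norml => /andP [_ h].
near=> n.
have n0 : (0 < n)%N by rewrite -(ltr_nat R); near: n; exact: (@evt_gt R 0).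
have n0' : (0:R) < n%:R by rewrite ltr0n.
have hdel : `|delta n| <= e / 4.
  have : `|0 - delta n| <= e / 4 by near: n; exact: evd.
  by rewrite sub0r normrN.
have hvz : forall i, ps (v n) i <= ps z i by near: n; apply: filter_forall => i; exact: evz.
have hvx : forall i, ps x i - ps (v n) i <= eta by near: n; apply: filter_forall => i; exact: evx.
have hthn : th%:R / n%:R <= r / 2.
  rewrite ler_pdivrMr // -ler_pdivrMl ?divr_gt0 //; apply: ltW.
  by near: n; exact: evt_gt.
have hln : th%:R * ln (n.+1%:R) / n%:R <= e / 4.
  by near: n; apply: ln_n => //; rewrite ler0n.
set S := (\sum_(m : {ffun 'I_th -> 'I_n.+1} | _) _).
have [mu [hp [hps herr]]] := round n hi0 Dz.
have hdom : dom_nat mu (lam n).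
  apply/forallP => i; rewrite -(ler_nat R); apply: le_trans (hps i).
  have := ps_normalize R n (lam n) i; rewrite -/(v n) => hv.
  have -> : (\sum_(j < th | (j <= i)%N) lam n j)%:R = n%:R * ps (v n) i.
    by rewrite hv mulrC divfK // gt_eqF.
  by rewrite ler_wpM2l ?ler0n.
have Dw := Delta_normalize R n0 hp.
have hw : forall i, `|y ord0 i - (@normalize R th n mu) ord0 i| <= r.
  move=> i; rewrite mxE.
  have -> : y ord0 i - (mu i)%:R / n%:R =
     (y ord0 i - z ord0 i) + (n%:R * z ord0 i - (mu i)%:R) / n%:R.
    by field; rewrite gt_eqF.
  apply: le_trans (ler_normD _ _) _.
  rewrite normrM (@gtr0_norm _ (n%:R^-1)) ?invr_gt0 //.
  have : `|n%:R * z ord0 i - (mu i)%:R| / n%:R <= th%:R / n%:R.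
    by rewrite ler_wpM2r ?invr_ge0 ?ler0n.
  have := zy i; lra.
have hphiw := hlb _ Dw hw.
have hpn := hphin n (lam n) mu n0 (hlam n) hp.
have Sge : expR (n%:R * phin n (lam n) mu) <= S.
  exact: (sum_ge (f := fun g => expR (n%:R * phin n (lam n) g)) hp hdom (fun g => ltW (expR_gt0 _))).
have S0 : 0 < S by apply: lt_le_trans Sge; exact: expR_gt0.
have LB : phi y - e <= ln S / n%:R.
  rewrite ler_pdivlMr //.
  apply: le_trans (_ : n%:R * phin n (lam n) mu <= _).
    rewrite mulrC ler_wpM2l ?ler0n //.
    move: hpn hdel; rewrite !ler_norml => /andP [a1 a2] /andP [b1 b2]; lra.
  by rewrite -ler_expR lnK // posrE.
pose K := phi y + e / 2 + e / 4.
have Sle : S <= expR (n%:R * K) * (n.+1 ^ th)%:R.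
  apply: (sum_le (f := fun g => expR (n%:R * phin n (lam n) g))); first exact: ltW (expR_gt0 _).
  move=> m hpm hdm; rewrite ler_expR ler_wpM2l ?ler0n //.
  have Dm := Delta_normalize R n0 hpm.
  have hdr := dom_normalize R n hdm.
  have := hub _ Dm (fun i => le_trans (lerB (lexx _) (hdr i)) (hvx i)).
  have := hphin n (lam n) m n0 (hlam n) hpm.
  move: hdel; rewrite !ler_norml => /andP [a1 a2] /andP [b1 b2]; rewrite /K; lra.
have UB : ln S / n%:R <= phi y + e.
  rewrite ler_pdivrMr //.
  have hl : ln S <= n%:R * K + ln (n.+1%:R) *+ th.
    rewrite -lnXn ?ltr0n // -[n%:R * K]expRK -lnM ?posrE ?expR_gt0 ?exprn_gt0 ?ltr0n //.
    by rewrite ler_ln ?posrE ?mulr_gt0 ?expR_gt0 ?exprn_gt0 ?ltr0n // -natrX.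
  apply: le_trans hl _.
  move: hln; rewrite ler_pdivrMr // -mulr_natl /K; lra.
rewrite ler_norml; apply/andP; split; lra.
Unshelve. all: by end_near.
Qed.
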